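(* Let $m\ge1$ and consider a preferential (dynamic) attachment circuit of index $m$. For $0\le j\le n$ let $D^{(m)}_{n,j}$ be the degree (indegree plus outdegree, edges counted with multiplicity) of node $j$ at time $n$. Then for $n\ge j$, $$\mathbb{E}\bigl[D^{(m)}_{n,j}\bigr]=\frac{\Gamma(n+1)\,\Gamma\bigl(j+\frac1{m+1}\bigr)}{\Gamma\bigl(n+\frac1{m+1}\bigr)\,\Gamma(j+1)}-1+m(1-\delta_{j,0}),$$ and $$\mathbb{V}\mathrm{ar}\bigl[D^{(m)}_{n,j}\bigr]=\frac{\Gamma(n+1)}{((m+1)j+1)\,\Gamma^2\bigl(n+\frac1{m+1}\bigr)\,\Gamma^2(j+1)\,\Gamma\bigl(n+\frac2{m+1}\bigr)}\times\Bigl\{2((m+1)n+1)\,\Gamma(j+1)\,\Gamma^2\bigl(n+\tfrac1{m+1}\bigr)\,\Gamma\bigl(j+\tfrac2{m+1}\bigr)$$ $$-((m+1)j+1)\Bigl[\Gamma(n+1)\,\Gamma\bigl(n+\tfrac2{m+1}\bigr)\,\Gamma^2\bigl(j+\tfrac1{m+1}\bigr)+\Gamma\bigl(n+\tfrac2{m+1}\bigr)\,\Gamma\bigl(n+\tfrac1{m+1}\bigr)\,\Gamma(j+1)\,\Gamma\bigl(j+\tfrac1{m+1}\bigr)\Bigr]\Bigr\}.$$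
   Context: Preferential (dynamic) attachment circuit of index $m\ge1$: at time $0$ there is a single node labeled $0$. At each time $n\ge1$ a new node labeled $n$ is added and $m$ parents are chosen for it one at a time, with replacement, among nodes $0,\dots,n-1$. Before the $(i+1)$-th choice ($i=0,\dots,m-1$), each existing node $v$ is chosen with probability $\frac{d_i(v)+1}{\sum_{x}(d_i(x)+1)}$, where $d_i(x)$ is the outdegree of $x$ in the current multigraph including the edges created by the first $i$ choices for node $n$; after each choice an edge from the chosen parent to node $n$ is immediately added (multi-edges allowed). $\delta_{j,0}$ is the Kronecker delta. *)

(* Defs.v *)
From Stdlib Require Import Reals List Arith.
From Coquelicot Require Import Coquelicot.
Import ListNotations.
Open Scope R_scope.

Definition Gamma (x : R) : R :=
  RInt_gen (fun t => Rpower t (x - 1) * exp (- t)) (at_right 0) (Rbar_locally p_infty).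

(* A multigraph is represented by its list of edges (parent, child),
   multi-edges being repeated entries. *)
Definition graph := list (nat * nat).

Definition outdeg (E : graph) (x : nat) : nat :=
  length (filter (fun e => Nat.eqb (fst e) x) E).

Definition degree (E : graph) (j : nat) : nat :=
  length (filter (fun e => Nat.eqb (fst e) j) E) +
  length (filter (fun e => Nat.eqb (snd e) j) E).

(* A finitely supported probability law on graphs: list of (probability, outcome). *)
Definition dist := list (R * graph).

Definition choose_step (n : nat) (D : dist) : dist :=
  flat_map (fun pE =>
    let p := fst pE in let E := snd pE in
    let W := fold_right Nat.add 0%nat (map (fun x => S (outdeg E x)) (seq 0 n)) in
    map (fun v => (p * (INR (S (outdeg E v)) / INR W), (v, n) :: E)) (seq 0 n))
  D.

Fixpoint pa_law (m n : nat) : dist :=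
  match n with
  | O => [(1, [])]
  | S k => Nat.iter m (choose_step (S k)) (pa_law m k)
  end.

Definition expect (D : dist) (f : graph -> R) : R :=
  fold_right Rplus 0 (map (fun pE => fst pE * f (snd pE)) D).

Definition mean_deg (m n j : nat) : R :=
  expect (pa_law m n) (fun E => INR (degree E j)).

Definition var_deg (m n j : nat) : R :=
  expect (pa_law m n) (fun E => (INR (degree E j) - mean_deg m n j) ^ 2).

Definition kdelta (a b : nat) : R := if Nat.eqb a b then 1 else 0.

(* Main.v *)
Require Import Defs.
From Stdlib Require Import Reals Lra Lia List Arith.
From Coquelicot Require Import Coquelicot.
Import ListNotations.
Open Scope R_scope.

Definition gf (x t : R) := Rpower t (x - 1) * exp (- t).

Lemma gf_cont x t : 0 < t -> continuous (gf x) t.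
Proof.
  intros Ht. apply (@ex_derive_continuous R_AbsRing R_NormedModule).
  unfold gf, Rpower. auto_derive. auto.
Qed.

Lemma gf_pos x t : 0 < t -> 0 < gf x t.
Proof. intros; unfold gf, Rpower. apply Rmult_lt_0_compat; apply exp_pos. Qed.

Lemma exp_le_mono x y : x <= y -> exp x <= exp y.
Proof. intros [H|H]. left; apply exp_increasing; auto. subst; lra. Qed.

Lemma gf_ex x a b : 0 < a -> 0 < b -> ex_RInt (gf x) a b.
Proof.
  intros Ha Hb. apply (@ex_RInt_continuous R_CompleteNormedModule). intros z Hz. apply gf_cont.
  assert (0 < Rmin a b) by (apply Rmin_glb_lt; auto). lra.
Qed.

Lemma RInt_gf_ge0 x a b : 0 < a -> a <= b -> 0 <= RInt (gf x) a b.
Proof.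
  intros. apply RInt_ge_0; auto. apply gf_ex; lra. intros; left; apply gf_pos; lra.
Qed.

Lemma pow_antideriv c t : 0 < c -> 0 < t ->
  is_derive (fun u => Rpower u c / c) t (Rpower t (c - 1)).
Proof.
  intros Hc Ht. unfold Rpower. auto_derive. auto.
  replace ((c-1) * ln t) with (c * ln t + - ln t) by ring.
  rewrite exp_plus, exp_Ropp, exp_ln by auto. field. lra.
Qed.

Lemma gf_bound c a b : 0 < c <= 1 -> 0 < a <= b -> RInt (gf c) a b <= / c + 1.
Proof.
  intros Hc Hab.
  set (a' := Rmin a 1). set (b' := Rmax b 1).
  assert (Ha' : 0 < a' <= a) by (unfold a'; split; [apply Rmin_glb_lt; lra | apply Rmin_l]).
  assert (Ha1 : a' <= 1) by apply Rmin_r.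
  assert (Hb' : b <= b') by apply Rmax_l.
  assert (Hb1 : 1 <= b') by apply Rmax_r.
  assert (E1 : RInt (gf c) a' a + RInt (gf c) a b = RInt (gf c) a' b).
  { apply (@RInt_Chasles R_CompleteNormedModule (gf c)); apply gf_ex; lra. }
  assert (E2 : RInt (gf c) a' b + RInt (gf c) b b' = RInt (gf c) a' b').
  { apply (@RInt_Chasles R_CompleteNormedModule (gf c)); apply gf_ex; lra. }
  assert (E3 : RInt (gf c) a' 1 + RInt (gf c) 1 b' = RInt (gf c) a' b').
  { apply (@RInt_Chasles R_CompleteNormedModule (gf c)); apply gf_ex; lra. }
  assert (P1 := RInt_gf_ge0 c a' a ltac:(lra) ltac:(lra)).
  assert (P2 := RInt_gf_ge0 c b b' ltac:(lra) ltac:(lra)).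
  assert (B1 : RInt (gf c) a' 1 <= / c).
  { assert (I1 : is_RInt (fun u => Rpower u (c - 1)) a' 1
                   (minus (Rpower 1 c / c) (Rpower a' c / c))).
    { apply (@is_RInt_derive R_CompleteNormedModule (fun u => Rpower u c / c)).
      - intros z Hz. rewrite Rmin_left, Rmax_right in Hz by lra. apply pow_antideriv; lra.
      - intros z Hz. rewrite Rmin_left, Rmax_right in Hz by lra.
        apply (@ex_derive_continuous R_AbsRing R_NormedModule).
        unfold Rpower. auto_derive. lra. }
    apply Rle_trans with (RInt (fun u => Rpower u (c - 1)) a' 1).
    - apply RInt_le; auto. apply gf_ex; lra. eexists; exact I1.
      intros z Hz. unfold gf. rewrite <- (Rmult_1_r (Rpower z (c-1))) at 2.
      apply Rmult_le_compat_l. unfold Rpower; left; apply exp_pos.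
      rewrite <- exp_0. apply exp_le_mono. lra.
    - rewrite (is_RInt_unique _ _ _ _ I1). unfold minus, plus, opp; simpl.
      assert (Rpower 1 c = 1) by (unfold Rpower; rewrite ln_1, Rmult_0_r, exp_0; auto).
      assert (0 < Rpower a' c) by (unfold Rpower; apply exp_pos).
      rewrite H. unfold Rdiv. assert (0 < / c) by (apply Rinv_0_lt_compat; lra).
      assert (0 < Rpower a' c * / c) by (apply Rmult_lt_0_compat; lra). nra. }
  assert (B2 : RInt (gf c) 1 b' <= 1).
  { assert (I1 : is_RInt (fun u => exp (- u)) 1 b'
                   (minus (- exp (- b')) (- exp (- 1)))).
    { apply (@is_RInt_derive R_CompleteNormedModule (fun u => - exp (- u))).
      - intros z Hz. auto_derive; auto. ring.
      - intros z Hz. apply (@ex_derive_continuous R_AbsRing R_NormedModule).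
        auto_derive. auto. }
    apply Rle_trans with (RInt (fun u => exp (- u)) 1 b').
    - apply RInt_le; auto. apply gf_ex; lra. eexists; exact I1.
      intros z Hz. unfold gf. rewrite <- (Rmult_1_l (exp (- z))) at 2.
      apply Rmult_le_compat_r. left; apply exp_pos.
      unfold Rpower. apply Rle_trans with (exp 0); [|rewrite exp_0; lra]. apply exp_le_mono.
      assert (0 < ln z) by (rewrite <- ln_1; apply ln_increasing; lra). nra.
    - rewrite (is_RInt_unique _ _ _ _ I1). unfold minus, plus, opp; simpl.
      assert (0 < exp (- b')) by apply exp_pos.
      assert (exp (-1) <= 1) by (apply Rle_trans with (exp 0); [apply exp_le_mono; lra | rewrite exp_0; lra]). lra. }
  lra.
Qed.

Lemma gf_exists c : 0 < c <= 1 -> exists L, 0 < L /\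
  is_RInt_gen (gf c) (at_right 0) (Rbar_locally p_infty) L.
Proof.
  intros Hc.
  set (E := fun y => exists a b, 0 < a <= b /\ y = RInt (gf c) a b).
  assert (HB : bound E).
  { exists (/ c + 1). intros y [a [b [Hab ->]]]. apply gf_bound; auto. }
  assert (HE : exists y, E y) by (exists (RInt (gf c) 1 2); exists 1, 2; split; [lra|auto]).
  destruct (completeness E HB HE) as [l [Hub Hlub]].
  assert (H12 : 0 < RInt (gf c) 1 2).
  { apply RInt_gt_0. lra. intros; apply gf_pos; lra. intros; apply gf_cont; lra. }
  exists l. split.
  { apply Rlt_le_trans with (RInt (gf c) 1 2); auto. apply Hub. exists 1, 2; split; [lra|auto]. }
  intros P [eps HP]. unfold filtermapi.
  assert (Hex : exists a0 b0, 0 < a0 <= b0 /\ l - eps < RInt (gf c) a0 b0).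
  { apply Classical_Prop.NNPP. intros Hn.
    assert (Hu : is_upper_bound E (l - eps)).
    { intros y [a [b [Hab ->]]]. apply Rnot_lt_le. intros Hlt. apply Hn. exists a, b; auto. }
    specialize (Hlub _ Hu). destruct eps as [e He]; simpl in *. lra. }
  destruct Hex as [a0 [b0 [Hab0 Hlt]]].
  apply Filter_prod with (fun a => 0 < a <= a0) (fun b => b0 <= b).
  - exists (mkposreal a0 (proj1 Hab0)). intros y Hy Hy0. split; auto.
    unfold ball in Hy; simpl in Hy. unfold AbsRing_ball, abs, minus, plus, opp in Hy; simpl in Hy.
    rewrite Rabs_right in Hy by lra. lra.
  - exists b0. intros; lra.
  - intros a b Ha Hb. simpl. exists (RInt (gf c) a b). split.
    + apply (@RInt_correct R_CompleteNormedModule). apply gf_ex; lra.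
    + apply HP.
      assert (E1 : RInt (gf c) a a0 + RInt (gf c) a0 b = RInt (gf c) a b).
      { apply (@RInt_Chasles R_CompleteNormedModule (gf c)); apply gf_ex; lra. }
      assert (E2 : RInt (gf c) a0 b0 + RInt (gf c) b0 b = RInt (gf c) a0 b).
      { apply (@RInt_Chasles R_CompleteNormedModule (gf c)); apply gf_ex; lra. }
      assert (P1 := RInt_gf_ge0 c a a0 ltac:(lra) ltac:(lra)).
      assert (P2 := RInt_gf_ge0 c b0 b ltac:(lra) ltac:(lra)).
      assert (Hle : RInt (gf c) a b <= l) by (apply Hub; exists a, b; split; [lra|auto]).
      unfold ball; simpl. unfold AbsRing_ball, abs, minus, plus, opp; simpl.
      apply Rabs_def1; lra.
Qed.

Definition gG (x t : R) := - (Rpower t x * exp (- t)).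

Lemma gG_deriv x t : 0 < t -> is_derive (gG x) t (gf (x+1) t - x * gf x t).
Proof.
  intros Ht. unfold gG, gf, Rpower. auto_derive. auto.
  replace (x + 1 - 1) with x by ring.
  replace ((x - 1) * ln t) with (x * ln t + - ln t) by ring.
  rewrite exp_plus, (exp_Ropp (ln t)), exp_ln by auto. field. lra.
Qed.

Lemma ball_R (c r y : R) : ball c r y <-> Rabs (y - c) < r.
Proof. unfold ball; simpl; unfold AbsRing_ball, abs, minus, plus, opp; simpl. tauto. Qed.

Lemma gG_lim0 x : 0 < x -> filterlim (gG x) (at_right 0) (locally 0).
Proof.
  intros Hx P [eps HP]. unfold filtermap.
  assert (Hd : 0 < Rpower eps (/ x)) by (unfold Rpower; apply exp_pos).
  exists (mkposreal _ Hd). intros t Ht Ht0. apply HP. apply ball_R.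
  apply ball_R in Ht. simpl in Ht. change (Rabs (t - 0) < Rpower eps (/ x)) in Ht. rewrite Rminus_0_r, Rabs_right in Ht by lra.
  unfold gG. rewrite Rminus_0_r, Rabs_Ropp, Rabs_right.
  2: { left; apply Rmult_lt_0_compat; [unfold Rpower|]; apply exp_pos. }
  assert (H1 : Rpower t x < Rpower (Rpower eps (/ x)) x) by (apply Rlt_Rpower_l; lra).
  rewrite Rpower_mult, Rinv_l, Rpower_1 in H1 by (destruct eps; simpl; lra).
  assert (exp (- t) <= 1).
  { apply Rle_trans with (exp 0); [apply exp_le_mono; lra | rewrite exp_0; lra]. }
  assert (0 < Rpower t x) by (unfold Rpower; apply exp_pos).
  assert (0 < exp (- t)) by apply exp_pos.
  nra.
Qed.

Lemma gG_liminf x : 0 < x -> filterlim (gG x) (Rbar_locally p_infty) (locally 0).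
Proof.
  intros Hx P [eps HP]. unfold filtermap.
  assert (Hr : 0 < / (2 * x)) by (apply Rinv_0_lt_compat; lra).
  destruct (is_lim_div_ln_p (ball 0 (mkposreal _ Hr))) as [M HM].
  { exists (mkposreal _ Hr). auto. }
  exists (Rmax M (Rmax 1 (- 2 * ln eps))). intros t Ht.
  assert (HtM : M < t) by (eapply Rle_lt_trans; [apply Rmax_l|exact Ht]).
  assert (Ht1 : 1 < t) by (eapply Rle_lt_trans; [eapply Rle_trans; [apply Rmax_l|apply Rmax_r]|exact Ht]).
  assert (Ht2 : - 2 * ln eps < t) by (eapply Rle_lt_trans; [eapply Rle_trans; [apply Rmax_r|apply Rmax_r]|exact Ht]).
  specialize (HM t HtM). change (Rabs (ln t / t - 0) < / (2 * x)) in HM. rewrite Rminus_0_r in HM.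
  apply Rabs_def2 in HM. destruct HM as [HM _].
  apply HP. apply ball_R. unfold gG, Rpower. rewrite Rminus_0_r, Rabs_Ropp, <- exp_plus.
  rewrite Rabs_right by (left; apply exp_pos).
  assert (x * ln t < t / 2).
  { apply Rmult_lt_compat_l with (r := 2 * x) in HM; [|lra].
    unfold Rdiv in HM. rewrite Rinv_r in HM by lra.
    replace (2 * x * (ln t * / t)) with ((2 * x * ln t) / t) in HM by (field; lra).
    apply (Rmult_lt_compat_r t) in HM; [|lra]. unfold Rdiv in HM.
    rewrite Rmult_assoc, Rinv_l, Rmult_1_r in HM by lra. lra. }
  destruct eps as [e He]; simpl in *.
  rewrite <- (exp_ln e) by auto. apply exp_increasing. lra.
Qed.

Lemma gf_step x L : 0 < x ->
  is_RInt_gen (gf x) (at_right 0) (Rbar_locally p_infty) L ->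
  is_RInt_gen (gf (x + 1)) (at_right 0) (Rbar_locally p_infty) (x * L).
Proof.
  intros Hx HL.
  assert (Hpos : filter_prod (at_right 0) (Rbar_locally p_infty) (fun ab => 0 < fst ab /\ 0 < snd ab)).
  { apply Filter_prod with (fun a => 0 < a) (fun b => 0 < b).
    - exists (mkposreal 1 Rlt_0_1). intros; auto.
    - exists 0. intros; auto.
    - intros; simpl; auto. }
  assert (HD : is_RInt_gen (Derive (gG x)) (at_right 0) (Rbar_locally p_infty) (0 - 0)).
  { apply is_RInt_gen_Derive.
    - eapply filter_imp; [|exact Hpos]. intros [a b] [Ha Hb] z Hz; simpl in *.
      assert (0 < Rmin a b) by (apply Rmin_glb_lt; auto).
      eexists. apply gG_deriv. lra.
    - eapply filter_imp; [|exact Hpos]. intros [a b] [Ha Hb] z Hz; simpl in *.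
      assert (0 < Rmin a b) by (apply Rmin_glb_lt; auto).
      apply continuous_ext_loc with (fun t => gf (x+1) t - x * gf x t).
      + assert (Hz0 : 0 < z) by lra. exists (mkposreal z Hz0). intros y Hy.
        change (Rabs (y - z) < z) in Hy. apply sym_eq, is_derive_unique, gG_deriv.
        apply Rabs_def2 in Hy. lra.
      + apply (@ex_derive_continuous R_AbsRing R_NormedModule).
        unfold gf, Rpower. auto_derive. lra.
    - apply gG_lim0; auto.
    - apply gG_liminf; auto. }
  assert (HS := is_RInt_gen_scal (Fa := at_right 0) (Fb := Rbar_locally p_infty) _ x _ HL).
  assert (HP := is_RInt_gen_plus (Fa := at_right 0) (Fb := Rbar_locally p_infty) _ _ _ _ HS HD).
  replace (x * L) with (plus (scal x L) (0 - 0)).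
  2: { unfold plus, scal; simpl; unfold mult; simpl; ring. }
  eapply is_RInt_gen_ext; [|exact HP].
  - eapply filter_imp; [|exact Hpos]. intros [a b] [Ha Hb] z Hz; simpl in *.
    assert (0 < Rmin a b) by (apply Rmin_glb_lt; auto).
    rewrite (is_derive_unique _ _ _ (gG_deriv x z ltac:(lra))).
    unfold plus, scal; simpl; unfold mult; simpl; ring.
Qed.

Lemma Gamma_int c k : 0 < c <= 1 -> exists L, 0 < L /\
  is_RInt_gen (gf (c + INR k)) (at_right 0) (Rbar_locally p_infty) L.
Proof.
  intros Hc. induction k as [|k IH].
  - simpl. rewrite Rplus_0_r. apply gf_exists; auto.
  - destruct IH as [L [HL HI]]. assert (0 <= INR k) by apply pos_INR.
    exists ((c + INR k) * L). split. apply Rmult_lt_0_compat; lra.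
    rewrite S_INR, <- Rplus_assoc. apply gf_step; auto. lra.
Qed.

Lemma Gamma_eq x L : is_RInt_gen (gf x) (at_right 0) (Rbar_locally p_infty) L -> Gamma x = L.
Proof.
  intros H. unfold Gamma. change (fun t => Rpower t (x - 1) * exp (- t)) with (gf x).
  apply (@is_RInt_gen_unique R_CompleteNormedModule); auto.
  apply Proper_StrongProper, at_right_proper_filter.
  apply Proper_StrongProper, Rbar_locally_filter.
Qed.

Lemma Gamma_pos c k : 0 < c <= 1 -> 0 < Gamma (INR k + c).
Proof.
  intros Hc. destruct (Gamma_int c k Hc) as [L [HL HI]]. rewrite Rplus_comm. rewrite (Gamma_eq _ _ HI). auto.
Qed.

Lemma Gamma_rec c k : 0 < c <= 1 -> Gamma (INR (S k) + c) = (INR k + c) * Gamma (INR k + c).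
Proof.
  intros Hc. destruct (Gamma_int c k Hc) as [L [HL HI]].
  assert (0 <= INR k) by apply pos_INR.
  assert (HI2 := gf_step (c + INR k) L ltac:(lra) HI).
  rewrite (Rplus_comm (INR k)), (Gamma_eq _ _ HI).
  replace (INR (S k) + c) with (c + INR k + 1) by (rewrite S_INR; ring).
  rewrite (Gamma_eq _ _ HI2). ring.
Qed.

Definition rsum (l : list R) := fold_right Rplus 0 l.
Definition supp (D : Defs.dist) (Q : graph -> Prop) := forall pE, In pE D -> Q (snd pE).
Definition Wt (E : graph) (n : nat) := fold_right Nat.add 0%nat (map (fun x => S (outdeg E x)) (seq 0 n)).

Lemma expect_app D1 D2 f : expect (D1 ++ D2) f = expect D1 f + expect D2 f.
Proof. induction D1 as [|a D1 IH]; unfold expect in *; simpl. ring. rewrite IH. ring. Qed.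

Lemma expect_map_aux (l : list nat) (p : R) (g : nat -> R) (h : nat -> graph) f :
  expect (map (fun v => (p * g v, h v)) l) f = p * rsum (map (fun v => g v * f (h v)) l).
Proof. induction l as [|v l IH]; unfold expect, rsum in *; simpl. ring. rewrite IH. ring. Qed.

Lemma expect_choose n D f :
  expect (choose_step n D) f =
  expect D (fun E => rsum (map (fun v => INR (S (outdeg E v)) / INR (Wt E n) * f ((v, n) :: E)) (seq 0 n))).
Proof.
  induction D as [|[p E] D IH]. reflexivity.
  change (choose_step n ((p, E) :: D)) with (map (fun v => (p * (INR (S (outdeg E v)) / INR (Wt E n)), (v, n) :: E)) (seq 0 n) ++ choose_step n D).
  rewrite expect_app, IH.
  rewrite (expect_map_aux (seq 0 n) p (fun v => INR (S (outdeg E v)) / INR (Wt E n)) (fun v => (v, n) :: E)).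
  unfold expect; simpl. reflexivity.
Qed.

Lemma expect_plus D f g : expect D (fun E => f E + g E) = expect D f + expect D g.
Proof. induction D as [|a D IH]; unfold expect in *; simpl. ring. rewrite IH. ring. Qed.

Lemma expect_scal D c f : expect D (fun E => c * f E) = c * expect D f.
Proof. induction D as [|a D IH]; unfold expect in *; simpl. ring. rewrite IH. ring. Qed.

Lemma expect_ext D Q f g : supp D Q -> (forall E, Q E -> f E = g E) -> expect D f = expect D g.
Proof.
  induction D as [|a D IH]; intros HS Hfg; unfold expect in *; simpl. auto.
  rewrite IH. rewrite Hfg. auto. apply HS; simpl; auto. intros pE H; apply HS; simpl; auto. auto.
Qed.

Lemma supp_choose n D Q Q' : supp D Q -> (forall E v, Q E -> (v < n)%nat -> Q' ((v, n) :: E)) ->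
  supp (choose_step n D) Q'.
Proof.
  intros HS HQ pE Hin. unfold choose_step in Hin. apply in_flat_map in Hin.
  destruct Hin as [[p E] [HinD Hin]]. apply in_map_iff in Hin. destruct Hin as [v [<- Hv]].
  apply in_seq in Hv. simpl. apply HQ. apply (HS (p, E) HinD). lia.
Qed.

Definition indeg (E : graph) (j : nat) := length (filter (fun e => Nat.eqb (snd e) j) E).

Definition Inv (m k i : nat) (E : graph) : Prop :=
  length E = (m * k + i)%nat /\
  (forall e, In e E -> (fst e < snd e /\ snd e <= k + Nat.min i 1)%nat) /\
  (forall j, indeg E j = if Nat.eqb j 0 then 0%nat else if Nat.leb j k then m
                         else if Nat.eqb j (S k) then i else 0%nat).

Lemma Inv_step m k i E v : Inv m k i E -> (v < S k)%nat -> Inv m k (S i) ((v, S k) :: E).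
Proof.
  intros [H1 [H2 H3]] Hv. split; [|split].
  - simpl. lia.
  - intros e [<-|He]; simpl. lia. specialize (H2 e He). lia.
  - intros j. unfold indeg in *. cbn [filter snd]. specialize (H3 j).
    destruct (Nat.eqb (S k) j) eqn:E1; cbn [length].
    + apply Nat.eqb_eq in E1. subst j. rewrite H3.
      rewrite (proj2 (Nat.leb_gt (S k) k)) by lia.
      rewrite Nat.eqb_refl. reflexivity.
    + rewrite H3. destruct (Nat.eqb j 0) eqn:E2; auto.
      destruct (Nat.leb j k); auto.
      apply Nat.eqb_neq in E1. rewrite (proj2 (Nat.eqb_neq j (S k))) by lia. auto.
Qed.

Lemma Inv_next m k E : Inv m k m E -> Inv m (S k) 0 E.
Proof.
  intros [H1 [H2 H3]]. split; [|split].
  - lia.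
  - intros e He. specialize (H2 e He). lia.
  - intros j. rewrite H3. destruct (Nat.eqb j 0) eqn:E0; auto.
    destruct (Nat.leb j k) eqn:E1.
    + apply Nat.leb_le in E1. rewrite (proj2 (Nat.leb_le j (S k))) by lia. auto.
    + apply Nat.leb_gt in E1. destruct (Nat.eqb j (S k)) eqn:E2.
      * apply Nat.eqb_eq in E2. subst. rewrite Nat.leb_refl. auto.
      * apply Nat.eqb_neq in E2. rewrite (proj2 (Nat.leb_gt j (S k))) by lia.
        destruct (Nat.eqb j (S (S k))); auto.
Qed.

Lemma Inv_iter m k i : supp (pa_law m k) (Inv m k 0) ->
  supp (Nat.iter i (choose_step (S k)) (pa_law m k)) (Inv m k i).
Proof.
  intros H0. induction i as [|i IH]. exact H0.
  simpl. apply (supp_choose _ _ _ _ IH). intros E v HE Hv. apply Inv_step; auto.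
Qed.

Lemma Inv_pa m k : supp (pa_law m k) (Inv m k 0).
Proof.
  induction k as [|k IH].
  - intros pE [<-|[]]. simpl. split; [|split]. simpl; lia. intros e []. intros j.
    unfold indeg; simpl. destruct j; simpl; auto. destruct j; auto.
  - simpl. intros pE Hin. apply Inv_next. apply (Inv_iter m k m IH pE Hin).
Qed.

Definition nsum (l : list nat) := fold_right Nat.add 0%nat l.

Lemma nsum_ind s n y : (s <= y < s + n)%nat ->
  nsum (map (fun x => if Nat.eqb y x then 1%nat else 0%nat) (seq s n)) = 1%nat.
Proof.
  revert s. induction n as [|n IH]; intros s Hs. lia.
  simpl. destruct (Nat.eqb y s) eqn:E.
  - apply Nat.eqb_eq in E. subst s. clear IH.
    assert (forall s' n', (y < s')%nat -> nsum (map (fun x => if Nat.eqb y x then 1%nat else 0%nat) (seq s' n')) = 0%nat).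
    { intros s' n'. revert s'. induction n' as [|n' IH']; intros s' Hs'; simpl; auto.
      rewrite (proj2 (Nat.eqb_neq y s')) by lia. apply IH'. lia. }
    rewrite H; lia.
  - apply Nat.eqb_neq in E. simpl. apply IH. lia.
Qed.

Lemma outdeg_cons e E x : outdeg (e :: E) x = ((if Nat.eqb (fst e) x then 1 else 0) + outdeg E x)%nat.
Proof. unfold outdeg. simpl. destruct (Nat.eqb (fst e) x); reflexivity. Qed.

Lemma nsum_plus (A B : nat -> nat) l : nsum (map (fun x => A x + B x)%nat l) = (nsum (map A l) + nsum (map B l))%nat.
Proof. induction l; simpl; auto. unfold nsum in *; simpl. rewrite IHl. lia. Qed.

Lemma nsum_outdeg E n : (forall e, In e E -> (fst e < n)%nat) -> nsum (map (outdeg E) (seq 0 n)) = length E.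
Proof.
  induction E as [|e E IH]; intros H.
  - unfold outdeg; simpl. induction (seq 0 n); simpl; auto.
  - rewrite (map_ext _ _ (outdeg_cons e E)). rewrite nsum_plus. rewrite IH by (intros; apply H; simpl; auto).
    rewrite nsum_ind. simpl; auto. assert (fst e < n)%nat by (apply H; simpl; auto). lia.
Qed.

Lemma nsum_const1 s n : nsum (map (fun _ => 1%nat) (seq s n)) = n.
Proof. revert s; induction n; intros s; simpl; auto. Qed.

Lemma Wt_eq E n : (forall e, In e E -> (fst e < n)%nat) -> Wt E n = (n + length E)%nat.
Proof.
  intros H. unfold Wt. rewrite <- (nsum_outdeg E n H).
  change (fold_right Nat.add 0%nat (map (fun x => S (outdeg E x)) (seq 0 n))) with (nsum (map (fun x => 1 + outdeg E x)%nat (seq 0 n))).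
  rewrite nsum_plus. f_equal. apply nsum_const1.
Qed.

Lemma rsum_lin (c a b : R) (g h : nat -> R) l :
  rsum (map (fun v => c * g v * (a + b * h v)) l) =
  c * (a * rsum (map g l) + b * rsum (map (fun v => g v * h v) l)).
Proof. induction l; unfold rsum in *; simpl. ring. rewrite IHl. ring. Qed.

Lemma rsum_INR (h : nat -> nat) l : rsum (map (fun v => INR (h v)) l) = INR (nsum (map h l)).
Proof. induction l; unfold rsum, nsum in *; simpl. auto. rewrite IHl, plus_INR. ring. Qed.

Lemma rsum_ind (g : nat -> R) j s n : (s <= j < s + n)%nat ->
  rsum (map (fun v => g v * (if Nat.eqb v j then 1 else 0)) (seq s n)) = g j.
Proof.
  revert s. induction n as [|n IH]; intros s Hs. lia.
  unfold rsum in *; simpl. destruct (Nat.eqb s j) eqn:E.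
  - apply Nat.eqb_eq in E. subst s. clear IH.
    assert (forall s' n', (j < s')%nat -> fold_right Rplus 0 (map (fun v => g v * (if Nat.eqb v j then 1 else 0)) (seq s' n')) = 0).
    { intros s' n'. revert s'. induction n' as [|n' IH']; intros s' Hs'; simpl; auto.
      rewrite (proj2 (Nat.eqb_neq s' j)) by lia. rewrite IH' by lia. ring. }
    rewrite H by lia. ring.
  - apply Nat.eqb_neq in E. rewrite IH by lia. ring.
Qed.

Lemma step_sum E n j (a b : R) (f : graph -> R) :
  (forall e, In e E -> (fst e < n)%nat) -> (j < n)%nat ->
  (forall v, (v < n)%nat -> f ((v, n) :: E) = a + b * (if Nat.eqb v j then 1 else 0)) ->
  rsum (map (fun v => INR (S (outdeg E v)) / INR (Wt E n) * f ((v, n) :: E)) (seq 0 n)) =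
  a + b * INR (S (outdeg E j)) / INR (n + length E).
Proof.
  intros HE Hj Hf.
  rewrite (map_ext_in _ (fun v => / INR (Wt E n) * INR (S (outdeg E v)) * (a + b * (if Nat.eqb v j then 1 else 0)))).
  2: { intros v Hv. apply in_seq in Hv. rewrite Hf by lia. unfold Rdiv. ring. }
  rewrite rsum_lin. rewrite rsum_ind by lia.
  rewrite (rsum_INR (fun v => S (outdeg E v))).
  change (nsum (map (fun v => S (outdeg E v)) (seq 0 n))) with (Wt E n).
  rewrite Wt_eq by auto.
  assert (0 < INR (n + length E)) by (apply lt_0_INR; lia).
  field. lra.
Qed.

Definition Xf (j : nat) (E : graph) := INR (S (outdeg E j)).
Definition Yf (j : nat) (E : graph) := Xf j E * (Xf j E + 1).

Lemma Xf_cons j v n E : Xf j ((v, n) :: E) = Xf j E + (if Nat.eqb v j then 1 else 0).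
Proof.
  unfold Xf. rewrite outdeg_cons. simpl fst. destruct (Nat.eqb v j); simpl Nat.add; rewrite ?S_INR; ring.
Qed.

Lemma Yf_cons j v n E : Yf j ((v, n) :: E) = Yf j E + 2 * (Xf j E + 1) * (if Nat.eqb v j then 1 else 0).
Proof. unfold Yf. rewrite Xf_cons. destruct (Nat.eqb v j); ring. Qed.

Lemma Inv_fst m k i E : Inv m k i E -> forall e, In e E -> (fst e < S k)%nat.
Proof. intros [_ [H _]] e He. specialize (H e He). lia. Qed.

Definition Dl m k i := Nat.iter i (choose_step (S k)) (pa_law m k).

Lemma Dl_S m k i : Dl m k (S i) = choose_step (S k) (Dl m k i).
Proof. reflexivity. Qed.

Lemma supp_Dl m k i : supp (Dl m k i) (Inv m k i).
Proof. apply Inv_iter, Inv_pa. Qed.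

Definition Wr m k i := INR (S k + (m * k + i)).

Lemma step_one m k i : expect (Dl m k (S i)) (fun _ => 1) = expect (Dl m k i) (fun _ => 1).
Proof.
  rewrite Dl_S, expect_choose. apply (expect_ext _ _ _ _ (supp_Dl m k i)).
  intros E HE. cbv beta. rewrite (step_sum E (S k) 0 1 0 (fun _ => 1)); auto. unfold Rdiv. rewrite Rmult_0_l, Rmult_0_l. apply Rplus_0_r.
  apply (Inv_fst m k i E HE). lia. intros; ring.
Qed.

Lemma step_X m k i j : (j <= k)%nat ->
  expect (Dl m k (S i)) (Xf j) = (1 + / Wr m k i) * expect (Dl m k i) (Xf j).
Proof.
  intros Hj. rewrite Dl_S, expect_choose, <- expect_scal. apply (expect_ext _ _ _ _ (supp_Dl m k i)).
  intros E HE. cbv beta. rewrite (step_sum E (S k) j (Xf j E) 1 (Xf j)).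
  - destruct HE as [HL _]. rewrite HL. unfold Wr, Xf. field.
    apply Rgt_not_eq, lt_0_INR. lia.
  - apply (Inv_fst m k i E HE).
  - lia.
  - intros v Hv. rewrite Xf_cons. ring.
Qed.

Lemma step_Y m k i j : (j <= k)%nat ->
  expect (Dl m k (S i)) (Yf j) = (1 + 2 / Wr m k i) * expect (Dl m k i) (Yf j).
Proof.
  intros Hj. rewrite Dl_S, expect_choose, <- expect_scal. apply (expect_ext _ _ _ _ (supp_Dl m k i)).
  intros E HE. cbv beta. rewrite (step_sum E (S k) j (Yf j E) (2 * (Xf j E + 1)) (Yf j)).
  - destruct HE as [HL _]. rewrite HL. unfold Wr, Yf, Xf. field.
    apply Rgt_not_eq, lt_0_INR. lia.
  - apply (Inv_fst m k i E HE).
  - lia.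
  - intros v Hv. rewrite Yf_cons. ring.
Qed.

Lemma mass m n : expect (pa_law m n) (fun _ => 1) = 1.
Proof.
  induction n as [|k IH].
  - unfold expect; simpl. ring.
  - change (pa_law m (S k)) with (Dl m k m).
    assert (forall i, expect (Dl m k i) (fun _ => 1) = 1).
    { induction i. exact IH. rewrite step_one. auto. }
    auto.
Qed.

Definition W0 m k := INR (S k + m * k).

Lemma W0_pos m k : 0 < W0 m k.
Proof. unfold W0. apply lt_0_INR. lia. Qed.

Lemma Wr_eq m k i : Wr m k i = W0 m k + INR i.
Proof. unfold Wr, W0. rewrite <- plus_INR. f_equal. lia. Qed.

Lemma iter_X m k i j : (j <= k)%nat ->
  expect (Dl m k i) (Xf j) = expect (pa_law m k) (Xf j) * (W0 m k + INR i) / W0 m k.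
Proof.
  intros Hj. assert (HW := W0_pos m k). induction i as [|i IH].
  - simpl. field. lra.
  - rewrite step_X by auto. rewrite IH, Wr_eq, S_INR.
    assert (0 <= INR i) by apply pos_INR. field. lra.
Qed.

Lemma iter_Y m k i j : (j <= k)%nat ->
  expect (Dl m k i) (Yf j) = expect (pa_law m k) (Yf j) *
     ((W0 m k + INR i) * (W0 m k + INR i + 1)) / (W0 m k * (W0 m k + 1)).
Proof.
  intros Hj. assert (HW := W0_pos m k). induction i as [|i IH].
  - simpl. field. lra.
  - rewrite step_Y by auto. rewrite IH, Wr_eq, S_INR.
    assert (0 <= INR i) by apply pos_INR. field. lra.
Qed.

Lemma level_X m k j : (j <= k)%nat ->
  expect (pa_law m (S k)) (Xf j) = expect (pa_law m k) (Xf j) *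
    ((INR m + 1) * (INR k + 1)) / ((INR m + 1) * INR k + 1).
Proof.
  intros Hj. change (pa_law m (S k)) with (Dl m k m). rewrite iter_X by auto.
  unfold W0. rewrite plus_INR, mult_INR, S_INR.
  assert (0 <= INR k) by apply pos_INR. assert (0 <= INR m) by apply pos_INR.
  field. nra.
Qed.

Lemma level_Y m k j : (j <= k)%nat ->
  expect (pa_law m (S k)) (Yf j) = expect (pa_law m k) (Yf j) *
    (((INR m + 1) * (INR k + 1)) * ((INR m + 1) * (INR k + 1) + 1)) /
    (((INR m + 1) * INR k + 1) * ((INR m + 1) * INR k + 2)).
Proof.
  intros Hj. change (pa_law m (S k)) with (Dl m k m). rewrite iter_Y by auto.
  unfold W0. rewrite plus_INR, mult_INR, S_INR.
  assert (0 <= INR k) by apply pos_INR. assert (0 <= INR m) by apply pos_INR.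
  field. nra.
Qed.

Lemma outdeg_zero m j E : Inv m j 0 E -> outdeg E j = 0%nat.
Proof.
  intros [_ [H _]]. unfold outdeg.
  assert (filter (fun e => Nat.eqb (fst e) j) E = []).
  { induction E as [|e E IH]; simpl; auto.
    assert (He := H e (or_introl eq_refl)).
    rewrite (proj2 (Nat.eqb_neq (fst e) j)) by lia. apply IH. intros; apply H; simpl; auto. }
  rewrite H0; auto.
Qed.

Lemma base_X m j : expect (pa_law m j) (Xf j) = 1.
Proof.
  rewrite <- (mass m j). apply (expect_ext _ _ _ _ (Inv_pa m j)).
  intros E HE. unfold Xf. rewrite (outdeg_zero m j E HE). simpl; auto.
Qed.

Lemma base_Y m j : expect (pa_law m j) (Yf j) = 2.
Proof.
  replace 2 with (2 * 1) by ring. rewrite <- (mass m j), <- expect_scal.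
  apply (expect_ext _ _ _ _ (Inv_pa m j)).
  intros E HE. unfold Yf, Xf. rewrite (outdeg_zero m j E HE). simpl; ring.
Qed.

Lemma mu_closed m j d : (1 <= m)%nat ->
  expect (pa_law m (d + j)) (Xf j) =
  Gamma (INR (d + j) + 1) * Gamma (INR j + 1 / (INR m + 1)) /
  (Gamma (INR (d + j) + 1 / (INR m + 1)) * Gamma (INR j + 1)).
Proof.
  intros Hm. assert (HM : 1 <= INR m) by (apply (le_INR 1); lia).
  assert (Ha : 0 < 1 / (INR m + 1) <= 1).
  { split. apply Rdiv_lt_0_compat; lra. unfold Rdiv. rewrite Rmult_1_l. rewrite <- Rinv_1 at 2. apply Rinv_le_contravar; lra. }
  assert (H1 : 0 < 1 <= 1) by lra.
  induction d as [|d IH].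
  - simpl Nat.add. rewrite base_X.
    assert (G1 := Gamma_pos _ j Ha). assert (G2 := Gamma_pos _ j H1). field. lra.
  - change (S d + j)%nat with (S (d + j)). rewrite level_X by lia. rewrite IH.
    rewrite (Gamma_rec 1 _ H1), (Gamma_rec _ _ Ha).
    assert (G1 := Gamma_pos _ j Ha). assert (G2 := Gamma_pos _ j H1).
    assert (G3 := Gamma_pos _ (d + j) Ha). assert (G4 := Gamma_pos _ (d + j) H1).
    assert (0 <= INR (d + j)) by apply pos_INR.
    field. repeat split; try lra; try nra.
Qed.

Lemma q_closed m j d : (1 <= m)%nat ->
  expect (pa_law m (d + j)) (Yf j) =
  2 * Gamma (INR (d + j) + 1) * Gamma (INR j + 2 / (INR m + 1)) * (INR (d + j) + 1 / (INR m + 1)) /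
  (Gamma (INR j + 1) * Gamma (INR (d + j) + 2 / (INR m + 1)) * (INR j + 1 / (INR m + 1))).
Proof.
  intros Hm. assert (HM : 1 <= INR m) by (apply (le_INR 1); lia).
  assert (Ha : 0 < 1 / (INR m + 1) <= 1).
  { split. apply Rdiv_lt_0_compat; lra. unfold Rdiv. rewrite Rmult_1_l. rewrite <- Rinv_1 at 2. apply Rinv_le_contravar; lra. }
  assert (Hb : 0 < 2 / (INR m + 1) <= 1).
  { split. apply Rdiv_lt_0_compat; lra. apply Rmult_le_reg_r with (INR m + 1). lra.
    unfold Rdiv. rewrite Rmult_assoc, Rinv_l by lra. lra. }
  assert (H1 : 0 < 1 <= 1) by lra.
  assert (0 <= INR j) by apply pos_INR.
  induction d as [|d IH].
  - simpl Nat.add. rewrite base_Y.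
    assert (G1 := Gamma_pos _ j Hb). assert (G2 := Gamma_pos _ j H1). field. repeat split; try lra; try nra.
  - change (S d + j)%nat with (S (d + j)). rewrite level_Y by lia. rewrite IH.
    rewrite (Gamma_rec 1 _ H1), (Gamma_rec _ _ Hb), S_INR.
    assert (G1 := Gamma_pos _ j Hb). assert (G2 := Gamma_pos _ j H1).
    assert (G3 := Gamma_pos _ (d + j) Hb). assert (G4 := Gamma_pos _ (d + j) H1).
    assert (0 <= INR (d + j)) by apply pos_INR.
    field. repeat split; try lra; try nra.
Qed.

Lemma degree_eq m n j E : (j <= n)%nat -> Inv m n 0 E ->
  INR (degree E j) = Xf j E + (-1 + INR m * (1 - kdelta j 0)) * 1.
Proof.
  intros Hj [_ [_ H3]]. unfold degree, Xf. specialize (H3 j). unfold indeg in H3.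
  change (length (filter (fun e => Nat.eqb (fst e) j) E)) with (outdeg E j).
  rewrite H3. unfold kdelta. destruct (Nat.eqb j 0) eqn:E0.
  - rewrite Nat.add_0_r, S_INR. ring.
  - rewrite (proj2 (Nat.leb_le j n) Hj). rewrite plus_INR, S_INR. ring.
Qed.

Theorem theorem4 (m n j : nat) (hm : (1 <= m)%nat) (hjn : (j <= n)%nat) :
  let a := 1 / INR (m + 1) in
  let b := 2 / INR (m + 1) in
  let N := INR n in let J := INR j in let M := INR m in
  mean_deg m n j =
    Gamma (N + 1) * Gamma (J + a) / (Gamma (N + a) * Gamma (J + 1))
    - 1 + M * (1 - kdelta j 0)
  /\
  var_deg m n j =
    Gamma (N + 1) /
      (((M + 1) * J + 1) * (Gamma (N + a)) ^ 2 * (Gamma (J + 1)) ^ 2 * Gamma (N + b))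
    * ( 2 * ((M + 1) * N + 1) * Gamma (J + 1) * (Gamma (N + a)) ^ 2 * Gamma (J + b)
        - ((M + 1) * J + 1) *
          ( Gamma (N + 1) * Gamma (N + b) * (Gamma (J + a)) ^ 2
            + Gamma (N + b) * Gamma (N + a) * Gamma (J + 1) * Gamma (J + a))).
Proof.
  cbv zeta. rewrite plus_INR. change (INR 1) with 1.
  destruct (Nat.le_exists_sub j n hjn) as [d [Hn _]].
  assert (Hmean : mean_deg m n j = expect (pa_law m n) (Xf j) + (-1 + INR m * (1 - kdelta j 0))).
  { unfold mean_deg. rewrite (expect_ext (pa_law m n) (Inv m n 0) _ (fun E => Xf j E + (-1 + INR m * (1 - kdelta j 0)) * 1) (Inv_pa m n)).
    rewrite expect_plus, expect_scal, mass. ring.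
    intros E HE. apply (degree_eq m n j E hjn HE). }
  assert (Hvar : var_deg m n j = expect (pa_law m n) (Yf j) - expect (pa_law m n) (Xf j)
                   - expect (pa_law m n) (Xf j) ^ 2).
  { unfold var_deg. rewrite Hmean. set (mu := expect (pa_law m n) (Xf j)).
    rewrite (expect_ext (pa_law m n) (Inv m n 0) _ (fun E => Yf j E + (- (1 + 2 * mu) * Xf j E + mu ^ 2 * 1)) (Inv_pa m n)).
    rewrite !expect_plus, !expect_scal, mass. unfold mu. ring.
    intros E HE. rewrite (degree_eq m n j E hjn HE). unfold Yf. ring. }
  rewrite Hvar, Hmean. subst n.
  rewrite (mu_closed m j d hm), (q_closed m j d hm).
  assert (HM : 1 <= INR m) by (apply (le_INR 1); lia).
  assert (Ha : 0 < 1 / (INR m + 1) <= 1).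
  { split. apply Rdiv_lt_0_compat; lra. unfold Rdiv. rewrite Rmult_1_l. rewrite <- Rinv_1 at 2. apply Rinv_le_contravar; lra. }
  assert (Hb : 0 < 2 / (INR m + 1) <= 1).
  { split. apply Rdiv_lt_0_compat; lra. apply Rmult_le_reg_r with (INR m + 1). lra.
    unfold Rdiv. rewrite Rmult_assoc, Rinv_l by lra. lra. }
  assert (H1 : 0 < 1 <= 1) by lra.
  assert (0 <= INR j) by apply pos_INR.
  assert (0 <= INR (d + j)) by apply pos_INR.
  assert (G1 := Gamma_pos _ j Hb). assert (G2 := Gamma_pos _ j H1).
  assert (G3 := Gamma_pos _ (d + j) Hb). assert (G4 := Gamma_pos _ (d + j) H1).
  assert (G5 := Gamma_pos _ j Ha). assert (G6 := Gamma_pos _ (d + j) Ha).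
  split.
  - ring.
  - field. repeat split; try lra; try nra.
Qed.
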